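(* Let $R=\begin{pmatrix} A & M\\ N & B\end{pmatrix}$ be a Morita context ring such that $MN$ is a nilpotent ideal of $A$ and $NM$ is a nilpotent ideal of $B$. Then $R$ is a CSNC ring if and only if both $A$ and $B$ are CSNC rings.
   Context: All rings are associative with identity $1$. For a ring $R$, $\mathrm{Id}(R)$, $U(R)$, $\mathrm{Nil}(R)$ denote the sets of idempotents, units and nilpotent elements. An element $a\in R$ is clean if $a=e+u$ for some $e\in\mathrm{Id}(R)$, $u\in U(R)$. An element $a$ is strongly nil-clean if $a=e+q$ with $e\in \mathrm{Id}(R)$, $q\in\mathrm{Nil}(R)$ and $eq=qe$. A ring $R$ is called CSNC if every clean element of $R$ is strongly nil-clean. A Morita context ring: $A,B$ are rings, $M$ is an $(A,B)$-bimodule, $N$ is a $(B,A)$-bimodule, and $\phi:M\otimes_B N\to A$, $\psi:N\otimes_A M\to B$ are bimodule homomorphisms satisfying $\phi(m\otimes n)m'=m\psi(n\otimes m')$ and $\psi(n\otimes m)n'=n\phi(m\otimes n')$; writing $mn=\phi(m\otimes n)$, $nm=\psi(n\otimes m)$, the set of matrices $\begin{pmatrix} a & m\\ n & b\end{pmatrix}$ with the usual matrix operations is an associative ring. $MN=\mathrm{Im}\,\phi$ and $NM=\mathrm{Im}\,\psi$ are the trace ideals. *)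

(* Defs.v *)
From HB Require Import structures.
From mathcomp Require Import all_boot all_order all_algebra.
Set Implicit Arguments. Unset Strict Implicit. Unset Printing Implicit Defensive.
Import GRing.Theory.
Local Open Scope ring_scope.

(* Ring-theoretic notions, stated for a raw structure (T, add, mul, zero, one),
   so that they apply both to library rings and to the Morita context ring,
   whose operations are defined explicitly below. *)
Section RawRing.
Variables (T : Type) (add mul : T -> T -> T) (zero one : T).

Definition rpow (x : T) (n : nat) : T := iter n (mul x) one.
Definition r_idem (e : T) : Prop := mul e e = e.
Definition r_unit (u : T) : Prop := exists v, mul u v = one /\ mul v u = one.
Definition r_nilp (q : T) : Prop := exists n : nat, rpow q n = zero.
Definition r_clean (a : T) : Prop :=
  exists e u, r_idem e /\ r_unit u /\ a = add e u.
Definition r_snc (a : T) : Prop :=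
  exists e q, r_idem e /\ r_nilp q /\ mul e q = mul q e /\ a = add e q.
Definition r_CSNC : Prop := forall a, r_clean a -> r_snc a.
End RawRing.

Definition CSNC (R : pzRingType) : Prop := @r_CSNC R +%R *%R 0 1.

Record morita_context := MoritaContext {
  mA : pzRingType; mB : pzRingType; mM : zmodType; mN : zmodType;
  actAM : mA -> mM -> mM;
  actMB : mM -> mB -> mM;
  actBN : mB -> mN -> mN;
  actNA : mN -> mA -> mN;
  phi : mM -> mN -> mA;
  psi : mN -> mM -> mB;
  actAM_addl : forall a a' m, actAM (a + a') m = actAM a m + actAM a' m;
  actAM_addr : forall a m m', actAM a (m + m') = actAM a m + actAM a m';
  actAM_mul : forall a a' m, actAM (a * a') m = actAM a (actAM a' m);
  actAM_1 : forall m, actAM 1 m = m;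
  actMB_addl : forall m m' b, actMB (m + m') b = actMB m b + actMB m' b;
  actMB_addr : forall m b b', actMB m (b + b') = actMB m b + actMB m b';
  actMB_mul : forall m b b', actMB m (b * b') = actMB (actMB m b) b';
  actMB_1 : forall m, actMB m 1 = m;
  actM_bimod : forall a m b, actMB (actAM a m) b = actAM a (actMB m b);
  actBN_addl : forall b b' n, actBN (b + b') n = actBN b n + actBN b' n;
  actBN_addr : forall b n n', actBN b (n + n') = actBN b n + actBN b n';
  actBN_mul : forall b b' n, actBN (b * b') n = actBN b (actBN b' n);
  actBN_1 : forall n, actBN 1 n = n;
  actNA_addl : forall n n' a, actNA (n + n') a = actNA n a + actNA n' a;
  actNA_addr : forall n a a', actNA n (a + a') = actNA n a + actNA n a';
  actNA_mul : forall n a a', actNA n (a * a') = actNA (actNA n a) a';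
  actNA_1 : forall n, actNA n 1 = n;
  actN_bimod : forall b n a, actNA (actBN b n) a = actBN b (actNA n a);
  (* phi : M (x)_B N -> A is an (A,A)-bimodule homomorphism *)
  phi_addl : forall m m' n, phi (m + m') n = phi m n + phi m' n;
  phi_addr : forall m n n', phi m (n + n') = phi m n + phi m n';
  phi_balanced : forall m b n, phi (actMB m b) n = phi m (actBN b n);
  phi_linl : forall a m n, phi (actAM a m) n = a * phi m n;
  phi_linr : forall m n a, phi m (actNA n a) = phi m n * a;
  (* psi : N (x)_A M -> B is a (B,B)-bimodule homomorphism *)
  psi_addl : forall n n' m, psi (n + n') m = psi n m + psi n' m;
  psi_addr : forall n m m', psi n (m + m') = psi n m + psi n m';
  psi_balanced : forall n a m, psi (actNA n a) m = psi n (actAM a m);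
  psi_linl : forall b n m, psi (actBN b n) m = b * psi n m;
  psi_linr : forall n m b, psi n (actMB m b) = psi n m * b;
  phi_psi_assoc : forall m n m', actAM (phi m n) m' = actMB m (psi n m');
  psi_phi_assoc : forall n m n', actBN (psi n m) n' = actNA n (phi m n')
}.

Section MoritaRing.
Variable C : morita_context.

(* elements of the Morita context ring: matrices [[a, m], [n, b]] *)
Definition mr_elt : Type := (mA C * mM C * mN C * mB C)%type.
Definition mr_mk a m n b : mr_elt := (a, m, n, b).
Definition mr_a (x : mr_elt) := x.1.1.1.
Definition mr_m (x : mr_elt) := x.1.1.2.
Definition mr_n (x : mr_elt) := x.1.2.
Definition mr_b (x : mr_elt) := x.2.

Definition mr_add (x y : mr_elt) : mr_elt :=
  mr_mk (mr_a x + mr_a y) (mr_m x + mr_m y) (mr_n x + mr_n y) (mr_b x + mr_b y).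
Definition mr_mul (x y : mr_elt) : mr_elt :=
  mr_mk (mr_a x * mr_a y + phi (mr_m x) (mr_n y))
        (actAM (mr_a x) (mr_m y) + actMB (mr_m x) (mr_b y))
        (actBN (mr_b x) (mr_n y) + actNA (mr_n x) (mr_a y))
        (psi (mr_n x) (mr_m y) + mr_b x * mr_b y).
Definition mr_zero : mr_elt := mr_mk 0 0 0 0.
Definition mr_one : mr_elt := mr_mk 1 0 0 1.

Definition morita_CSNC : Prop := r_CSNC mr_add mr_mul mr_zero mr_one.

(* the trace ideals MN = Im phi and NM = Im psi (finite sums of products) *)
Definition in_MN (x : mA C) : Prop :=
  exists s : seq (mM C * mN C), x = \sum_(p <- s) phi p.1 p.2.
Definition in_NM (x : mB C) : Prop :=
  exists s : seq (mN C * mM C), x = \sum_(p <- s) psi p.1 p.2.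
End MoritaRing.

(* an ideal I (given as a predicate) of R is nilpotent: I^k = 0 for some k,
   i.e. every product of k elements of I vanishes *)
Definition nilpotent_ideal (R : pzRingType) (I : R -> Prop) : Prop :=
  exists k : nat, forall s : seq R,
    size s = k -> (forall x, x \in s -> I x) -> \prod_(x <- s) x = 0.

(* Main.v *)
Require Import Defs.
From HB Require Import structures.
From mathcomp Require Import all_boot all_order all_algebra.
From mathcomp Require Import ring zify.
Set Implicit Arguments. Unset Strict Implicit. Unset Printing Implicit Defensive.
Import GRing.Theory.
Local Open Scope ring_scope.

Fixpoint Pk (k : nat) : {poly int} :=
  if k is k'.+1 then (Pk k') ^+ 2 *+ 3 - (Pk k') ^+ 3 *+ 2 else 'X.
Definition Dp : {poly int} := 'X - 'X ^+ 2.

Lemma Pk_idem k : exists c, Pk k - Pk k ^+ 2 = Dp ^+ (2 ^ k) * c.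
Proof.
elim: k => [|k [c Hc]] /=; first by exists 1; rewrite expn0 expr1 mulr1.
exists (c ^+ 2 * ((3%:R - Pk k *+ 2) * (1 + Pk k *+ 2))).
have -> : Dp ^+ (2 ^ k.+1) = (Dp ^+ (2 ^ k)) ^+ 2 by rewrite -exprM expnS mulnC.
have -> : Pk k ^+ 2 *+ 3 - Pk k ^+ 3 *+ 2 - (Pk k ^+ 2 *+ 3 - Pk k ^+ 3 *+ 2) ^+ 2
   = (Pk k - Pk k ^+ 2) ^+ 2 * ((3%:R - Pk k *+ 2) * (1 + Pk k *+ 2)) by ring.
rewrite Hc; ring.
Qed.

Lemma Pk_lift k : exists q, Pk k - 'X = Dp * q.
Proof.
elim: k => [|k [q Hq]] /=; first by exists 0; rewrite subrr mulr0.
have [c Hc] := Pk_idem k.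
exists (Dp ^+ (2 ^ k).-1 * c * (Pk k *+ 2 - 1) + q).
have -> : Pk k ^+ 2 *+ 3 - Pk k ^+ 3 *+ 2 - 'X
   = (Pk k - Pk k ^+ 2) * (Pk k *+ 2 - 1) + (Pk k - 'X) by ring.
rewrite Hc Hq [RHS]mulrDr !mulrA -exprS prednK ?expn_gt0 //.
Qed.

Section NZ.
Variable S : pzRingType.
Hypothesis h10 : (1 : S) != 0.
Definition Snz : Type := S.
HB.instance Definition _ := GRing.PzRing.on Snz.
HB.instance Definition _ := GRing.PzSemiRing_isNonZero.Build Snz h10.

Lemma lift_idem_nz (a : Snz) n : (a - a * a) ^+ n = 0 ->
  exists e p : Snz, [/\ e * e = e, e * a = a * e, e - a = (a - a * a) * p &
                      p * (a - a * a) = (a - a * a) * p].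
Proof.
move=> hn.
have cfu : commr_rmorph (intr : int -> Snz) a by move=> z; apply: commr_int.
pose f := horner_morph cfu.
have fX : f 'X = a by rewrite /f horner_morphX.
have fD : f Dp = a - a * a by rewrite /Dp /f rmorphB rmorphXn /= horner_morphX expr2.
have fcomm : forall p q, f p * f q = f q * f p.
  by move=> p q; rewrite /f -!rmorphM /= mulrC.
have hK : (n <= 2 ^ n)%N by apply: ltnW; apply: ltn_expl.
set K := n in hK *.
have [c Hc] := Pk_idem K.
have [q Hq] := Pk_lift K.
exists (f (Pk K)), (f q); split.
- apply/eqP; rewrite eq_sym -subr_eq0; apply/eqP.
  rewrite /f -rmorphM -expr2 -rmorphB /= Hc rmorphM rmorphXn /= -/f fD.
  by rewrite -(subnK hK) exprD hn mulr0 mul0r.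
- by rewrite -fX fcomm.
- by rewrite -{1}fX /f -rmorphB /= Hq rmorphM /= -/f fD.
- by rewrite -fD fcomm.
Qed.
End NZ.

Lemma lift_idem (S : pzRingType) (a : S) n : (a - a * a) ^+ n = 0 ->
  exists e p : S, [/\ e * e = e, e * a = a * e, e - a = (a - a * a) * p &
                      p * (a - a * a) = (a - a * a) * p].
Proof.
have [h10|h10] := eqVneq (1 : S) 0.
  have z : forall x : S, x = 0 by move=> x; rewrite -[x]mulr1 h10 mulr0.
  by move=> _; exists 0, 0; rewrite !mulr0 !mul0r (z a) subr0.
exact: (@lift_idem_nz S h10 a n).
Qed.

Section Gen.
Variable S : pzRingType.
Implicit Types a x y e u v t : S.

Definition nilp (x : S) := exists n, x ^+ n = 0.

Lemma rpowE x n : rpow *%R 1 x n = x ^+ n.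
Proof. by elim: n => //= n ->; rewrite exprS. Qed.

Lemma r_nilpE x : r_nilp *%R 0 1 x <-> nilp x.
Proof. by split=> -[n hn]; exists n; rewrite ?rpowE // in hn *. Qed.

Lemma nilp_comm x y : GRing.comm x y -> nilp x -> nilp (x * y).
Proof. by move=> c [n hn]; exists n; rewrite exprMn_comm // hn mul0r. Qed.

Lemma nilp_opp x : nilp x -> nilp (- x).
Proof. by move=> [n hn]; exists n; rewrite exprNn hn mulr0. Qed.

Lemma snc_nil a : r_snc +%R *%R 0 1 a -> nilp (a - a * a).
Proof.
move=> [e [q [he [hq [heq ->]]]]]; move/r_nilpE: hq => hq.
have -> : e + q - (e + q) * (e + q) = q * (1 - e *+ 2 - q).
  rewrite [(e + q) * _]mulrDl !mulrDr he -heq mulr1 !mulrN mulrnAr -heq mulr2n.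
  by rewrite !opprD !addrA (addrC e q) addrK.
apply: nilp_comm hq.
by apply: commrB; [apply: commrB; [exact: commr1| apply: commrMn]|exact: commr_refl].
Qed.

Lemma nil_snc a : nilp (a - a * a) -> r_snc +%R *%R 0 1 a.
Proof.
move=> [n hn]; have [e [p [he hea hd hp]]] := lift_idem hn.
exists e, (a - e); split; first by []; split; [|split].
- apply (proj2 (r_nilpE _)); rewrite -opprB hd; apply/nilp_opp/nilp_comm => //; by exists n.
- by rewrite mulrBr mulrBl hea he.
- by rewrite addrC subrK.
Qed.

Lemma onesub_unit x : nilp x -> exists w, (1 - x) * w = 1 /\ w * (1 - x) = 1.
Proof.
move=> [n hn]; exists (\sum_(i < n) x ^+ i).
have h : (1 - x) * \sum_(i < n) x ^+ i = 1.
  by rewrite -opprB mulNr -subrX1 hn sub0r opprK.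
split => //; rewrite -(commr_sum _ _) //.
move=> i _; apply: commrX; apply: commr_sym; apply: commrB; [exact: commr1|exact: commr_refl].
Qed.

Variable I : S -> Prop.
Hypotheses (ID : forall x y, I x -> I y -> I (x + y))
  (IN : forall x, I x -> I (- x))
  (IMl : forall x y, I y -> I (x * y)) (IMr : forall x y, I x -> I (x * y))
  (Inil : forall x, I x -> nilp x).

Lemma onep_unit t : I t -> exists w, (1 + t) * w = 1 /\ w * (1 + t) = 1.
Proof. by move=> /IN /Inil /onesub_unit; rewrite opprK. Qed.

Lemma unit_lift u v : I (u * v - 1) -> I (v * u - 1) -> r_unit *%R 1 u.
Proof.
move=> /onep_unit [w1 [h1 _]] /onep_unit [w2 [_ h2]].
rewrite addrC subrK in h1; rewrite addrC subrK in h2.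
exists (v * w1); split; first by rewrite mulrA.
have -> : v * w1 = w2 * v.
  by rewrite -[v * w1]mul1r -h2 -!mulrA (mulrA u) h1 mulr1.
by rewrite -mulrA.
Qed.

Lemma clean_lift a e u v : I (e - e * e) -> I (u * v - 1) -> I (v * u - 1) ->
  a = e + u -> r_clean +%R *%R 1 a.
Proof.
move=> he huv hvu ->.
have [n hn] := Inil he.
have [f [p [hf _ hfe _]]] := lift_idem hn.
have hIf : I (f - e) by rewrite hfe; apply: IMr.
exists f, (u - (f - e)); split; first exact: hf; split.
- apply: (@unit_lift _ v).
    by rewrite mulrBl addrAC; apply: ID => //; apply/IN/IMr.
  by rewrite mulrBr addrAC; apply: ID => //; apply/IN/IMl.
- by rewrite opprB addrCA (addrCA f e) subrr addr0 addrC.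
Qed.

Lemma nil_add c t : nilp c -> I t -> nilp (c + t).
Proof.
move=> [n hn] ht.
have H : forall k, I ((c + t) ^+ k - c ^+ k) \/ k = 0%N.
  elim=> [|k [IH|->]]; [by right| left | left].
  - have -> : (c + t) ^+ k.+1 - c ^+ k.+1
       = c * ((c + t) ^+ k - c ^+ k) + t * (c + t) ^+ k.
      by rewrite !exprS mulrDl mulrBr addrAC.
    by apply: ID; [apply: IMl|apply: IMr].
  - by rewrite !expr1 addrC addKr.
case: (H n.+1) => // /Inil [m hm].
exists (n.+1 * m)%N; rewrite exprM.
by move: hm; rewrite [c ^+ _.+1]exprS hn mulr0 subr0.
Qed.
End Gen.

Section QI.
Variable S : pzRingType.
Variable I : S -> Prop.
Hypothesis IMl : forall c a, I a -> I (c * a).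

Inductive QI : nat -> S -> Prop :=
| QI0 x : QI 0 x
| QIz j : QI j 0
| QIadd j x y : QI j x -> QI j y -> QI j (x + y)
| QIstep j a x : I a -> QI j x -> QI j.+1 (a * x).

Lemma QI_one a : I a -> QI 1 a.
Proof. by move=> h; rewrite -[a]mulr1; apply: QIstep => //; apply: QI0. Qed.

Lemma QI_sum (T : Type) j (s : seq T) (f : T -> S) :
  (forall i, QI j (f i)) -> QI j (\sum_(i <- s) f i).
Proof.
move=> h; elim: s => [|i s IH]; first by rewrite big_nil; apply: QIz.
by rewrite big_cons; apply: QIadd.
Qed.

Lemma QI_mull c j x : QI j x -> QI j (c * x).
Proof.
elim=> [y|k|k y z _ h1 _ h2|k a y ha hy IH].
- exact: QI0.
- by rewrite mulr0; apply: QIz.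
- by rewrite mulrDr; apply: QIadd.
- by rewrite mulrA; apply: QIstep; [apply: IMl|].
Qed.

Lemma QI_mul j k x y : QI j x -> QI k y -> QI (j + k) (x * y).
Proof.
move=> hx hy; elim: hx => [z|i|i z w _ h1 _ h2|i a z ha _ IH].
- exact: QI_mull.
- by rewrite mul0r; apply: QIz.
- by rewrite mulrDl; apply: QIadd.
- by rewrite -mulrA addSn; apply: QIstep.
Qed.

Lemma QI_weak j x : QI j x -> forall k, (k <= j)%N -> QI k x.
Proof.
elim=> [y|i|i y z _ h1 _ h2|i a y ha _ IH] k hk.
- by move: hk; rewrite leqn0 => /eqP ->; apply: QI0.
- exact: QIz.
- by apply: QIadd; [apply: h1|apply: h2].
- case: k hk => [|k] hk; first exact: QI0.
  by apply: QIstep => //; apply: IH.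
Qed.

Lemma QI_kill_gen K : (forall s : seq S, size s = K -> (forall x, x \in s -> I x) ->
     \prod_(x <- s) x = 0) ->
  forall j x, QI j x -> forall s : seq S, (size s + j)%N = K ->
    (forall y, y \in s -> I y) -> \prod_(y <- s) y * x = 0.
Proof.
move=> hK j x; elim=> [y|i|i y z _ h1 _ h2|i a y ha _ IH] s hs hI.
- by rewrite hK ?mul0r // -hs addn0.
- by rewrite mulr0.
- by rewrite mulrDr h1 ?h2 ?addr0.
- rewrite mulrA.
  have -> : \prod_(y <- s) y * a = \prod_(y <- s ++ [:: a]) y
    by rewrite big_cat big_seq1.
  apply: IH; first by rewrite size_cat /= -addnA add1n.
  by move=> w; rewrite mem_cat mem_seq1 => /orP [/hI //|/eqP ->].
Qed.

Lemma QI_kill K : (forall s : seq S, size s = K -> (forall x, x \in s -> I x) ->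
     \prod_(x <- s) x = 0) ->
  forall j x, QI j x -> (K <= j)%N -> x = 0.
Proof.
move=> hK j x hx hj.
have := QI_kill_gen hK (QI_weak hx hj) (s := [::]) (erefl _).
by rewrite big_nil mul1r; apply.
Qed.
End QI.

Lemma dbl0 (V : zmodType) (x : V) : x = x + x -> x = 0.
Proof. by move=> h; have := congr1 (fun y => y - x) h; rewrite /= subrr addrK. Qed.

Section Mor.
Variable C : morita_context.
Local Notation A := (mA C). Local Notation B := (mB C).
Local Notation M := (mM C). Local Notation N := (mN C).
Local Notation am := (@actAM C). Local Notation mb := (@actMB C).
Local Notation bn := (@actBN C). Local Notation na := (@actNA C).
Local Notation phi := (@phi C). Local Notation psi := (@psi C).

Lemma phi0l n : phi 0 n = 0. Proof. by apply: dbl0; rewrite -phi_addl addr0. Qed.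
Lemma phi0r m : phi m 0 = 0. Proof. by apply: dbl0; rewrite -phi_addr addr0. Qed.
Lemma psi0l m : psi 0 m = 0. Proof. by apply: dbl0; rewrite -psi_addl addr0. Qed.
Lemma psi0r n : psi n 0 = 0. Proof. by apply: dbl0; rewrite -psi_addr addr0. Qed.
Lemma am0l m : am 0 m = 0. Proof. by apply: dbl0; rewrite -actAM_addl addr0. Qed.
Lemma am0r a : am a 0 = 0. Proof. by apply: dbl0; rewrite -actAM_addr addr0. Qed.
Lemma mb0l b : mb 0 b = 0. Proof. by apply: dbl0; rewrite -actMB_addl addr0. Qed.
Lemma mb0r m : mb m 0 = 0. Proof. by apply: dbl0; rewrite -actMB_addr addr0. Qed.
Lemma bn0l n : bn 0 n = 0. Proof. by apply: dbl0; rewrite -actBN_addl addr0. Qed.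
Lemma bn0r b : bn b 0 = 0. Proof. by apply: dbl0; rewrite -actBN_addr addr0. Qed.
Lemma na0l a : na 0 a = 0. Proof. by apply: dbl0; rewrite -actNA_addl addr0. Qed.
Lemma na0r n : na n 0 = 0. Proof. by apply: dbl0; rewrite -actNA_addr addr0. Qed.

Definition mr_opp (x : mr_elt C) :=
  mr_mk (- mr_a x) (- mr_m x) (- mr_n x) (- mr_b x).

Lemma mr_addA : associative (@mr_add C).
Proof. by move=> x y z; rewrite /mr_add /mr_mk /=; rewrite !addrA. Qed.
Lemma mr_addC : commutative (@mr_add C).
Proof.
by move=> x y; rewrite /mr_add /mr_mk /=; congr (_, _, _, _); rewrite addrC.
Qed.
Lemma mr_add0 : left_id (mr_zero C) (@mr_add C).
Proof. by move=> [[[a m] n] b]; rewrite /mr_add /mr_mk /= !add0r. Qed.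
Lemma mr_addN : left_inverse (mr_zero C) mr_opp (@mr_add C).
Proof. by move=> [[[a m] n] b]; rewrite /mr_add /mr_mk /= !addNr. Qed.
Lemma mr_mulA : associative (@mr_mul C).
Proof.
move=> [[[a1 m1] n1] b1] [[[a2 m2] n2] b2] [[[a3 m3] n3] b3].
rewrite /mr_mul /mr_mk /mr_a /mr_m /mr_n /mr_b /=.
congr (_, _, _, _).
- rewrite mulrDl mulrDr phi_addl phi_addr phi_linl phi_linr phi_balanced !mulrA.
  by rewrite -!addrA; congr (_ + _); rewrite [RHS]addrC -addrA.
- rewrite actAM_addl actAM_addr actMB_addl actMB_addr -actAM_mul -actMB_mul
     phi_psi_assoc actM_bimod.
  by rewrite -!addrA; congr (_ + _); rewrite addrCA.
- rewrite actBN_addl actBN_addr actNA_addl actNA_addr -actBN_mul -actNA_mul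
     psi_phi_assoc actN_bimod.
  by rewrite -!addrA [RHS]addrCA; congr (_ + _); rewrite [RHS]addrC -addrA.
- rewrite mulrDl mulrDr psi_addl psi_addr psi_linl psi_linr psi_balanced !mulrA.
  by rewrite -!addrA [RHS]addrCA; congr (_ + _); rewrite addrCA.
Qed.
Lemma mr_mul1 : left_id (mr_one C) (@mr_mul C).
Proof.
move=> [[[a m] n] b]; rewrite /mr_mul /mr_mk /mr_a /mr_m /mr_n /mr_b /=.
by rewrite mul1r phi0l addr0 actAM_1 mb0l addr0 actBN_1 na0l addr0 psi0l mul1r add0r.
Qed.
Lemma mr_mulr1 : right_id (mr_one C) (@mr_mul C).
Proof.
move=> [[[a m] n] b]; rewrite /mr_mul /mr_mk /mr_a /mr_m /mr_n /mr_b /=.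
by rewrite mulr1 phi0r addr0 am0r actMB_1 add0r bn0r actNA_1 add0r psi0r mulr1 add0r.
Qed.
Lemma mr_mulDl : left_distributive (@mr_mul C) (@mr_add C).
Proof.
move=> [[[a1 m1] n1] b1] [[[a2 m2] n2] b2] [[[a3 m3] n3] b3].
rewrite /mr_mul /mr_add /mr_mk /mr_a /mr_m /mr_n /mr_b /=.
rewrite mulrDl phi_addl actAM_addl actMB_addl actBN_addl actNA_addl psi_addl mulrDl.
by congr (_, _, _, _); rewrite addrACA.
Qed.
Lemma mr_mulDr : right_distributive (@mr_mul C) (@mr_add C).
Proof.
move=> [[[a1 m1] n1] b1] [[[a2 m2] n2] b2] [[[a3 m3] n3] b3].
rewrite /mr_mul /mr_add /mr_mk /mr_a /mr_m /mr_n /mr_b /=.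
rewrite mulrDr phi_addr actAM_addr actMB_addr actBN_addr actNA_addr psi_addr mulrDr.
by congr (_, _, _, _); rewrite addrACA.
Qed.
End Mor.

Definition mrT (C : morita_context) : Type := mr_elt C.
HB.instance Definition _ C := Choice.copy (mrT C) (mA C * mM C * mN C * mB C)%type.
HB.instance Definition _ C := GRing.isPzRing.Build (mrT C)
  (@mr_addA C) (@mr_addC C) (@mr_add0 C) (@mr_addN C)
  (@mr_mulA C) (@mr_mul1 C) (@mr_mulr1 C) (@mr_mulDl C) (@mr_mulDr C).

Lemma morita_CSNCE C : morita_CSNC C <-> CSNC (mrT C).
Proof. by []. Qed.

Section Mor2.
Variable C : morita_context.
Local Notation A := (mA C). Local Notation B := (mB C).
Local Notation M := (mM C). Local Notation N := (mN C).
Local Notation am := (@actAM C). Local Notation mb := (@actMB C).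
Local Notation bn := (@actBN C). Local Notation na := (@actNA C).
Local Notation phi := (@phi C). Local Notation psi := (@psi C).
Local Notation MN := (@in_MN C). Local Notation NM := (@in_NM C).

Lemma phiNl m n : phi (- m) n = - phi m n.
Proof. by apply/eqP; rewrite -addr_eq0 -phi_addl addNr phi0l. Qed.
Lemma psiNl n m : psi (- n) m = - psi n m.
Proof. by apply/eqP; rewrite -addr_eq0 -psi_addl addNr psi0l. Qed.

Lemma MN_phi m n : MN (phi m n).
Proof. by exists [:: (m, n)]; rewrite big_seq1. Qed.
Lemma NM_psi n m : NM (psi n m).
Proof. by exists [:: (n, m)]; rewrite big_seq1. Qed.
Lemma MN_0 : MN 0. Proof. by exists [::]; rewrite big_nil. Qed.
Lemma NM_0 : NM 0. Proof. by exists [::]; rewrite big_nil. Qed.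
Lemma MN_add x y : MN x -> MN y -> MN (x + y).
Proof. by move=> [s ->] [t ->]; exists (s ++ t); rewrite big_cat. Qed.
Lemma NM_add x y : NM x -> NM y -> NM (x + y).
Proof. by move=> [s ->] [t ->]; exists (s ++ t); rewrite big_cat. Qed.
Lemma MN_opp x : MN x -> MN (- x).
Proof.
move=> [s ->]; exists [seq (- p.1, p.2) | p <- s].
by rewrite big_map -sumrN; apply: eq_bigr => p _; rewrite phiNl.
Qed.
Lemma NM_opp x : NM x -> NM (- x).
Proof.
move=> [s ->]; exists [seq (- p.1, p.2) | p <- s].
by rewrite big_map -sumrN; apply: eq_bigr => p _; rewrite psiNl.
Qed.
Lemma MN_mull c x : MN x -> MN (c * x).
Proof.
move=> [s ->]; exists [seq (am c p.1, p.2) | p <- s].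
by rewrite big_map mulr_sumr; apply: eq_bigr => p _; rewrite phi_linl.
Qed.
Lemma NM_mull c x : NM x -> NM (c * x).
Proof.
move=> [s ->]; exists [seq (bn c p.1, p.2) | p <- s].
by rewrite big_map mulr_sumr; apply: eq_bigr => p _; rewrite psi_linl.
Qed.
Lemma MN_mulr x c : MN x -> MN (x * c).
Proof.
move=> [s ->]; exists [seq (p.1, na p.2 c) | p <- s].
by rewrite big_map mulr_suml; apply: eq_bigr => p _; rewrite phi_linr.
Qed.
Lemma NM_mulr x c : NM x -> NM (x * c).
Proof.
move=> [s ->]; exists [seq (p.1, mb p.2 c) | p <- s].
by rewrite big_map mulr_suml; apply: eq_bigr => p _; rewrite psi_linr.
Qed.

Local Notation QA := (QI MN). Local Notation QB := (QI NM).

Inductive QM : nat -> M -> Prop :=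
| QM0 m : QM 0 m
| QMz j : QM j 0
| QMadd j x y : QM j x -> QM j y -> QM j (x + y)
| QMstep j a m : MN a -> QM j m -> QM j.+1 (am a m).

Inductive QN : nat -> N -> Prop :=
| QN0 n : QN 0 n
| QNz j : QN j 0
| QNadd j x y : QN j x -> QN j y -> QN j (x + y)
| QNstep j n a : MN a -> QN j n -> QN j.+1 (na n a).

Lemma QM_sum (T : Type) j (s : seq T) (f : T -> M) :
  (forall i, QM j (f i)) -> QM j (\sum_(i <- s) f i).
Proof.
move=> h; elim: s => [|i s IH]; first by rewrite big_nil; apply: QMz.
by rewrite big_cons; apply: QMadd.
Qed.
Lemma QN_sum (T : Type) j (s : seq T) (f : T -> N) :
  (forall i, QN j (f i)) -> QN j (\sum_(i <- s) f i).
Proof.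
move=> h; elim: s => [|i s IH]; first by rewrite big_nil; apply: QNz.
by rewrite big_cons; apply: QNadd.
Qed.

Lemma QM_weak j x : QM j x -> forall k, (k <= j)%N -> QM k x.
Proof.
elim=> [y|i|i y z _ h1 _ h2|i a y ha _ IH] k hk.
- by move: hk; rewrite leqn0 => /eqP ->; apply: QM0.
- exact: QMz.
- by apply: QMadd; [apply: h1|apply: h2].
- case: k hk => [|k] hk; first exact: QM0.
  by apply: QMstep => //; apply: IH.
Qed.
Lemma QN_weak j x : QN j x -> forall k, (k <= j)%N -> QN k x.
Proof.
elim=> [y|i|i y z _ h1 _ h2|i y a ha _ IH] k hk.
- by move: hk; rewrite leqn0 => /eqP ->; apply: QN0.
- exact: QNz.
- by apply: QNadd; [apply: h1|apply: h2].
- case: k hk => [|k] hk; first exact: QN0.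
  by apply: QNstep => //; apply: IH.
Qed.

Lemma QM_aml c j m : QM j m -> QM j (am c m).
Proof.
elim=> [y|i|i y z _ h1 _ h2|i a y ha hy IH].
- exact: QM0.
- by rewrite am0r; apply: QMz.
- by rewrite actAM_addr; apply: QMadd.
- by rewrite -actAM_mul; apply: QMstep => //; apply: MN_mull.
Qed.
Lemma QM_am j k x m : QA j x -> QM k m -> QM (j + k) (am x m).
Proof.
move=> hx hm; elim: hx => [z|i|i z w _ h1 _ h2|i a z ha _ IH].
- exact: QM_aml.
- by rewrite am0l; apply: QMz.
- by rewrite actAM_addl; apply: QMadd.
- by rewrite actAM_mul addSn; apply: QMstep.
Qed.

Lemma QM_mbr j m t : QM j m -> QM j (mb m t).
Proof.
elim=> [y|i|i y z _ h1 _ h2|i a y ha hy IH].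
- exact: QM0.
- by rewrite mb0l; apply: QMz.
- by rewrite actMB_addl; apply: QMadd.
- by rewrite actM_bimod; apply: QMstep.
Qed.
Lemma QM_mb1 j m t : QM j m -> NM t -> QM j.+1 (mb m t).
Proof.
move=> hm [s ->]; elim: hm => [y|i|i y z _ h1 _ h2|i a y ha hy IH].
- rewrite (big_morph _ (actMB_addr y) (mb0r y)); apply: QM_sum => p.
  by rewrite -phi_psi_assoc; apply: QMstep; [apply: MN_phi|apply: QM0].
- by rewrite mb0l; apply: QMz.
- by rewrite actMB_addl; apply: QMadd.
- by rewrite actM_bimod; apply: QMstep.
Qed.
Lemma QM_mb j k m t : QM j m -> QB k t -> QM (j + k) (mb m t).
Proof.
move=> hm ht; elim: ht j m hm => [z|i|i z w _ h1 _ h2|i b z hb _ IH] j m hm.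
- by rewrite addn0; apply: QM_mbr.
- by rewrite mb0r; apply: QMz.
- by rewrite actMB_addr; apply: QMadd; [apply: h1|apply: h2].
- by rewrite actMB_mul addnS -addSn; apply: IH; apply: QM_mb1.
Qed.

Lemma QN_nar c j n : QN j n -> QN j (na n c).
Proof.
elim=> [y|i|i y z _ h1 _ h2|i y a ha hy IH].
- exact: QN0.
- by rewrite na0l; apply: QNz.
- by rewrite actNA_addl; apply: QNadd.
- by rewrite -actNA_mul; apply: QNstep => //; apply: MN_mulr.
Qed.
Lemma QN_na j k n x : QN j n -> QA k x -> QN (j + k) (na n x).
Proof.
move=> hn hx; elim: hx j n hn => [z|i|i z w _ h1 _ h2|i a z ha _ IH] j n hn.
- by rewrite addn0; apply: QN_nar.
- by rewrite na0r; apply: QNz.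
- by rewrite actNA_addr; apply: QNadd; [apply: h1|apply: h2].
- by rewrite actNA_mul addnS -addSn; apply: IH; apply: QNstep.
Qed.

Lemma QN_bnl c j n : QN j n -> QN j (bn c n).
Proof.
elim=> [y|i|i y z _ h1 _ h2|i y a ha hy IH].
- exact: QN0.
- by rewrite bn0r; apply: QNz.
- by rewrite actBN_addr; apply: QNadd.
- by rewrite -actN_bimod; apply: QNstep.
Qed.
Lemma QN_bn1 j n t : QN j n -> NM t -> QN j.+1 (bn t n).
Proof.
move=> hn [s ->]; elim: hn => [y|i|i y z _ h1 _ h2|i y a ha hy IH].
- rewrite (big_morph (fun t => bn t y) (fun t t' => actBN_addl t t' y) (bn0l y)).
  apply: QN_sum => p.
  by rewrite psi_phi_assoc; apply: QNstep; [apply: MN_phi|apply: QN0].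
- by rewrite bn0r; apply: QNz.
- by rewrite actBN_addr; apply: QNadd.
- by rewrite -actN_bimod; apply: QNstep.
Qed.
Lemma QN_bn j k t n : QB j t -> QN k n -> QN (j + k) (bn t n).
Proof.
move=> ht; elim: ht k n => [z|i|i z w _ h1 _ h2|i b z hb _ IH] k n hn.
- by apply: QN_bnl.
- by rewrite bn0l; apply: QNz.
- by rewrite actBN_addl; apply: QNadd; [apply: h1|apply: h2].
- by rewrite actBN_mul addSn; apply: QN_bn1 => //; apply: IH.
Qed.

Lemma QA_phi0 k m n : QN k n -> QA k.+1 (phi m n).
Proof.
elim=> [y|i|i y z _ h1 _ h2|i y a ha hy IH].
- by apply: QI_one; apply: MN_phi.
- by rewrite phi0r; apply: QIz.
- by rewrite phi_addr; apply: QIadd.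
- rewrite phi_linr -addn1; apply: QI_mul => //; first exact: MN_mull.
  exact: QI_one.
Qed.
Lemma QA_phi j k m n : QM j m -> QN k n -> QA (j + k).+1 (phi m n).
Proof.
move=> hm hn; elim: hm => [y|i|i y z _ h1 _ h2|i a y ha hy IH].
- exact: QA_phi0.
- by rewrite phi0l; apply: QIz.
- by rewrite phi_addl; apply: QIadd.
- by rewrite phi_linl addSn; apply: QIstep.
Qed.

Lemma QB_psi0 k m : QM k m -> forall n, QB k.+1 (psi n m).
Proof.
elim=> [y|i|i y z _ h1 _ h2|i a y [s ->] hy IH] n.
- by apply: QI_one; apply: NM_psi.
- by rewrite psi0r; apply: QIz.
- by rewrite psi_addr; apply: QIadd.
- rewrite (big_morph (fun t => am t y) (fun t t' => actAM_addl t t' y) (am0l y)).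
  rewrite (big_morph _ (psi_addr n) (psi0r n)); apply: QI_sum => p.
  by rewrite phi_psi_assoc psi_linr; apply: QIstep; [apply: NM_psi|apply: IH].
Qed.
Lemma QB_psi j k n m : QN j n -> QM k m -> QB (j + k).+1 (psi n m).
Proof.
move=> hn; elim: hn k m => [y|i|i y z _ h1 _ h2|i y a ha hy IH] k m hm.
- by apply: QB_psi0.
- by rewrite psi0l; apply: QIz.
- by rewrite psi_addl; apply: QIadd; [apply: h1|apply: h2].
- by rewrite psi_balanced addSn -addnS; apply: IH; apply: QMstep.
Qed.
End Mor2.

Section Mor3.
Variable C : morita_context.
Local Notation A := (mA C). Local Notation B := (mB C).
Local Notation M := (mM C). Local Notation N := (mN C).
Local Notation R := (mrT C).
Local Notation am := (@actAM C). Local Notation mb := (@actMB C).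
Local Notation bn := (@actBN C). Local Notation na := (@actNA C).
Local Notation phi := (@phi C). Local Notation psi := (@psi C).
Local Notation MN := (@in_MN C). Local Notation NM := (@in_NM C).
Local Notation QA := (QI MN). Local Notation QB := (QI NM).
Local Notation QM := (@QM C). Local Notation QN := (@QN C).

Variables (KA KB : nat).
Hypothesis hKA : forall s : seq A, size s = KA -> (forall x, x \in s -> MN x) ->
     \prod_(x <- s) x = 0.
Hypothesis hKB : forall s : seq B, size s = KB -> (forall x, x \in s -> NM x) ->
     \prod_(x <- s) x = 0.

Lemma QM_kill_gen j m : QM j m -> forall s : seq A, (size s + j)%N = KA ->
    (forall y, y \in s -> MN y) -> am (\prod_(y <- s) y) m = 0.
Proof.
elim=> [y|i|i y z _ h1 _ h2|i a y ha _ IH] s hs hI.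
- by rewrite hKA ?am0l // -hs addn0.
- by rewrite am0r.
- by rewrite actAM_addr h1 ?h2 ?addr0.
- rewrite -actAM_mul.
  have -> : \prod_(y <- s) y * a = \prod_(y <- s ++ [:: a]) y
    by rewrite big_cat big_seq1.
  apply: IH; first by rewrite size_cat /= -addnA add1n.
  by move=> w; rewrite mem_cat mem_seq1 => /orP [/hI //|/eqP ->].
Qed.
Lemma QM_kill j m : QM j m -> (KA <= j)%N -> m = 0.
Proof.
move=> hm hj; have := QM_kill_gen (QM_weak hm hj) (s := [::]) (erefl _).
by rewrite big_nil actAM_1; apply.
Qed.
Lemma QN_kill_gen j n : QN j n -> forall s : seq A, (size s + j)%N = KA ->
    (forall y, y \in s -> MN y) -> na n (\prod_(y <- s) y) = 0.
Proof.
elim=> [y|i|i y z _ h1 _ h2|i y a ha _ IH] s hs hI.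
- by rewrite hKA ?na0r // -hs addn0.
- by rewrite na0l.
- by rewrite actNA_addl h1 ?h2 ?addr0.
- rewrite -actNA_mul.
  have -> : a * \prod_(y <- s) y = \prod_(y <- a :: s) y by rewrite big_cons.
  apply: IH; first by rewrite /= addSn -addnS.
  by move=> w; rewrite in_cons => /orP [/eqP ->|/hI].
Qed.
Lemma QN_kill j n : QN j n -> (KA <= j)%N -> n = 0.
Proof.
move=> hn hj; have := QN_kill_gen (QN_weak hn hj) (s := [::]) (erefl _).
by rewrite big_nil actNA_1; apply.
Qed.

Definition G h (y : R) := [/\ QA (h.+1 %/ 2) (mr_a y), QM (h %/ 2) (mr_m y),
   QN (h %/ 2) (mr_n y) & QB (h.+1 %/ 2) (mr_b y)].

Lemma G_mul h k (y z : R) : G h y -> G k z -> G (h + k) (y * z).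
Proof.
move=> [ya ym yn yb] [za zm zn zb]; split.
- apply: QIadd.
    apply: QI_weak; first exact: (QI_mul (@MN_mull C) ya za). lia.
  apply: QI_weak; first exact: (QA_phi ym zn). lia.
- apply: QMadd.
    apply: QM_weak; first exact: (QM_am ya zm). lia.
  apply: QM_weak; first exact: (QM_mb ym zb). lia.
- apply: QNadd.
    apply: QN_weak; first exact: (QN_bn yb zn). lia.
  apply: QN_weak; first exact: (QN_na yn za). lia.
- apply: QIadd.
    apply: QI_weak; first exact: (QB_psi yn zm). lia.
  apply: QI_weak; first exact: (QI_mul (@NM_mull C) yb zb). lia.
Qed.

Lemma G_exp (y : R) n : G 1 y -> G n (y ^+ n).
Proof.
move=> hy; elim: n => [|n IH].
  by rewrite expr0; split; [apply: QI0|apply: QM0|apply: QN0|apply: QI0].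
by rewrite exprS; apply: (G_mul hy IH).
Qed.

Lemma G_kill (y : R) : G (KA + KB).*2.+1 y -> y = 0.
Proof.
case: y => [[[a m] n] b] [ha hm hn hb].
rewrite /mr_a /mr_m /mr_n /mr_b /= in ha hm hn hb.
rewrite (QI_kill hKA ha) ?(QM_kill hm) ?(QN_kill hn) ?(QI_kill hKB hb) //; lia.
Qed.

Lemma MN_nilp x : MN x -> nilp x.
Proof.
move=> hx; exists KA; have := hKA (s := nseq KA x).
rewrite size_nseq big_nseq -(rpowE x KA) /rpow; apply => // w.
by rewrite mem_nseq => /andP [_ /eqP ->].
Qed.
Lemma NM_nilp x : NM x -> nilp x.
Proof.
move=> hx; exists KB; have := hKB (s := nseq KB x).
rewrite size_nseq big_nseq -(rpowE x KB) /rpow; apply => // w.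
by rewrite mem_nseq => /andP [_ /eqP ->].
Qed.

Lemma LA (x : R) k : MN (mr_a (x ^+ k) - mr_a x ^+ k) /\ NM (mr_b (x ^+ k) - mr_b x ^+ k).
Proof.
elim: k => [|k [IHa IHb]].
  by rewrite !expr0 !subrr; split; [apply: MN_0|apply: NM_0].
rewrite exprS [mr_a x ^+ _]exprS [mr_b x ^+ _]exprS.
change (MN (mr_a x * mr_a (x ^+ k) + phi (mr_m x) (mr_n (x ^+ k)) - mr_a x * mr_a x ^+ k)
  /\ NM (psi (mr_n x) (mr_m (x ^+ k)) + mr_b x * mr_b (x ^+ k) - mr_b x * mr_b x ^+ k)).
split.
- rewrite addrAC -mulrBr; apply: MN_add; [exact: MN_mull|exact: MN_phi].
- rewrite -addrA -mulrBr; apply: NM_add; [exact: NM_psi|exact: NM_mull].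
Qed.

Lemma nilp_a (x : R) : nilp x -> nilp (mr_a x).
Proof.
move=> [k hk]; have [h _] := LA x k; rewrite hk sub0r in h.
have [n hn] := MN_nilp (MN_opp h); exists (k * n)%N.
by rewrite opprK in hn; rewrite exprM hn.
Qed.
Lemma nilp_b (x : R) : nilp x -> nilp (mr_b x).
Proof.
move=> [k hk]; have [_ h] := LA x k; rewrite hk sub0r in h.
have [n hn] := NM_nilp (NM_opp h); exists (k * n)%N.
by rewrite opprK in hn; rewrite exprM hn.
Qed.

Lemma diag_nil (x : R) : nilp (mr_a x) -> nilp (mr_b x) -> nilp x.
Proof.
move=> [ka ha] [kb hb].
have [h1 h2] := LA x (ka + kb).
rewrite [mr_a x ^+ _]exprD ha mul0r subr0 in h1; rewrite [mr_b x ^+ _]exprD hb mulr0 subr0 in h2.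
have hG : G 1 (x ^+ (ka + kb)).
  by split; [apply: QI_one|apply: QM0|apply: QN0|apply: QI_one].
exists ((ka + kb) * (KA + KB).*2.+1)%N.
by rewrite exprM; apply: G_kill; apply: G_exp.
Qed.
End Mor3.

Lemma opp_rearr (V : zmodType) (p q r : V) : p - (q + r) = (p - r) + - q.
Proof. by rewrite opprD addrCA addrC. Qed.

Ltac simp0 := rewrite ?phi0l ?phi0r ?psi0l ?psi0r ?am0l ?am0r ?mb0l ?mb0r ?bn0l ?bn0r
  ?na0l ?na0r ?mulr0 ?mul0r ?mulr1 ?mul1r ?addr0 ?add0r.

Theorem theorem2p20 (C : morita_context)
  (hMN : nilpotent_ideal (@in_MN C)) (hNM : nilpotent_ideal (@in_NM C)) :
  morita_CSNC C <-> (CSNC (mA C) /\ CSNC (mB C)).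
Proof.
have [KA hKA] := hMN; have [KB hKB] := hNM.
change (CSNC (mrT C) <-> CSNC (mA C) /\ CSNC (mB C)).
split.
- move=> HR; split.
  + move=> a [e [u [he [[v [huv hvu]] ->]]]].
    apply: nil_snc.
    have hX : r_clean +%R *%R 1 (mr_mk (e + u) 0 0 1 : mrT C).
      exists (mr_mk e 0 0 0 : mrT C), (mr_mk u 0 0 1 : mrT C); split; [|split].
      * rewrite /r_idem; change (mr_mul (mr_mk e 0 0 0) (mr_mk e 0 0 0)
          = mr_mk e 0 0 (0 : mB C)).
        by rewrite /mr_mul /mr_mk /=; simp0; rewrite ?he.
      * exists (mr_mk v 0 0 1 : mrT C); split.
          change (mr_mul (mr_mk u 0 0 1) (mr_mk v 0 0 1) = mr_mk 1 0 0 (1 : mB C)).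
          by rewrite /mr_mul /mr_mk /=; simp0; rewrite ?huv.
        change (mr_mul (mr_mk v 0 0 1) (mr_mk u 0 0 1) = mr_mk 1 0 0 (1 : mB C)).
        by rewrite /mr_mul /mr_mk /=; simp0; rewrite ?hvu.
      * change (mr_mk (e + u) 0 0 1 = mr_mk (e + u) (0 + 0) (0 + 0) (0 + 1 : mB C)).
        by rewrite !addr0 add0r.
    have := nilp_a hKA (snc_nil (HR _ hX)).
    change (nilp ((e + u) - ((e + u) * (e + u) + phi 0 0)) ->
            nilp (e + u - (e + u) * (e + u))).
    by rewrite phi0l addr0.
  + move=> b [e [u [he [[v [huv hvu]] ->]]]].
    apply: nil_snc.
    have hX : r_clean +%R *%R 1 (mr_mk 1 0 0 (e + u) : mrT C).
      exists (mr_mk 0 0 0 e : mrT C), (mr_mk 1 0 0 u : mrT C); split; [|split].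
      * rewrite /r_idem; change (mr_mul (mr_mk 0 0 0 e) (mr_mk 0 0 0 e)
          = mr_mk (0 : mA C) 0 0 e).
        by rewrite /mr_mul /mr_mk /=; simp0; rewrite ?he.
      * exists (mr_mk 1 0 0 v : mrT C); split.
          change (mr_mul (mr_mk 1 0 0 u) (mr_mk 1 0 0 v) = mr_mk (1 : mA C) 0 0 1).
          by rewrite /mr_mul /mr_mk /=; simp0; rewrite ?huv.
        change (mr_mul (mr_mk 1 0 0 v) (mr_mk 1 0 0 u) = mr_mk (1 : mA C) 0 0 1).
        by rewrite /mr_mul /mr_mk /=; simp0; rewrite ?hvu.
      * change (mr_mk 1 0 0 (e + u) = mr_mk (0 + 1 : mA C) (0 + 0) (0 + 0) (e + u)).
        by rewrite !addr0 add0r.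
    have := nilp_b hKB (snc_nil (HR _ hX)).
    change (nilp ((e + u) - (psi 0 0 + (e + u) * (e + u))) ->
            nilp (e + u - (e + u) * (e + u))).
    by rewrite psi0l add0r.
- move=> [HA HB] x [E [U [hE [[V [hUV hVU]] ->]]]].
  apply: nil_snc; apply: (diag_nil hKA hKB).
  + have hEa : mr_a E * mr_a E + phi (mr_m E) (mr_n E) = mr_a E := congr1 (@mr_a C) hE.
    have hUa : mr_a U * mr_a V + phi (mr_m U) (mr_n V) = 1 := congr1 (@mr_a C) hUV.
    have hVa : mr_a V * mr_a U + phi (mr_m V) (mr_n U) = 1 := congr1 (@mr_a C) hVU.
    change (nilp ((mr_a E + mr_a U) - ((mr_a E + mr_a U) * (mr_a E + mr_a U)
       + phi (mr_m E + mr_m U) (mr_n E + mr_n U)))).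
    rewrite opprD addrA.
    apply: (nil_add (@MN_add C) (@MN_mull C) (@MN_mulr C) (MN_nilp hKA)); last exact/MN_opp/MN_phi.
    apply: snc_nil; apply: HA.
    apply: (clean_lift (@MN_add C) (@MN_opp C) (@MN_mull C)
        (@MN_mulr C) (MN_nilp hKA) (v := mr_a V)) => //.
    * by rewrite -{1}hEa addrAC subrr add0r; apply: MN_phi.
    * by rewrite -hUa opprD addrA subrr add0r; apply/MN_opp/MN_phi.
    * by rewrite -hVa opprD addrA subrr add0r; apply/MN_opp/MN_phi.
  + have hEb : psi (mr_n E) (mr_m E) + mr_b E * mr_b E = mr_b E := congr1 (@mr_b C) hE.
    have hUb : psi (mr_n U) (mr_m V) + mr_b U * mr_b V = 1 := congr1 (@mr_b C) hUV.
    have hVb : psi (mr_n V) (mr_m U) + mr_b V * mr_b U = 1 := congr1 (@mr_b C) hVU.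
    change (nilp ((mr_b E + mr_b U) - (psi (mr_n E + mr_n U) (mr_m E + mr_m U)
       + (mr_b E + mr_b U) * (mr_b E + mr_b U)))).
    rewrite opp_rearr.
    apply: (nil_add (@NM_add C) (@NM_mull C) (@NM_mulr C) (NM_nilp hKB)); last exact/NM_opp/NM_psi.
    apply: snc_nil; apply: HB.
    apply: (clean_lift (@NM_add C) (@NM_opp C) (@NM_mull C)
        (@NM_mulr C) (NM_nilp hKB) (v := mr_b V)) => //.
    * by rewrite -{1}hEb addrK; apply: NM_psi.
    * by rewrite -hUb opprD addrCA subrr addr0; apply/NM_opp/NM_psi.
    * by rewrite -hVb opprD addrCA subrr addr0; apply/NM_opp/NM_psi.
Qed.
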